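(* Let $h=\sqrt{\mathsf{min}(\mathsf{min}+4\mathsf{max})}-3\mathsf{min}$. When the characteristic functions range over $V_2$, the AMC-$h$ policy has a competitive ratio of $\frac{\mathsf{min}+\sqrt{\mathsf{min}(\mathsf{min}+4\mathsf{max})}}{2\mathsf{max}}$ for maximizing social welfare with respect to greedy players.
   Context: Players: a finite set $N=\{a_1,\dots,a_n\}$. A characteristic function is $v:2^N\to\mathbb{R}_{\ge 0}$ with $v(\emptyset)=0$. There are fixed, known constants $0<\mathsf{min}\le\mathsf{max}$ and every $v$ considered is monotone and bounded: $\mathsf{min}\le v(S)\le v(T)\le\mathsf{max}$ for all nonempty $S\subseteq T\subseteq N$. $V_2$ denotes the set of such $v$ with $2\mathsf{min}\le\mathsf{max}<3\mathsf{min}$. A coalition structure is a partition $C$ of $N$; its social welfare is $\mathsf{SW}(C\mid v)=\sum_{S\in C}v(S)$. Online process: an arrival order is a permutation $\pi=(\pi_1,\dots,\pi_n)$ of $N$; player $\pi_t$ arrives at time $t$; $\pi_{\prec t}$ is the set of players arriving before time $t$ and $\pi^{-1}(i)$ is the arrival time of $i$. For $S\subseteq N$, $\pi_{|S}$ denotes the players of $S$ in the relative order of $\pi$. Let $C^{t-1}$ be the coalition structure of players arrived before time $t$ ($C^0=\emptyset$). At time $t$, player $\pi_t$ either joins an existing coalition $S\in C^{t-1}$ or forms $\{\pi_t\}$ (choice $S=\emptyset$); decisions are never revised. A distribution policy $\varphi$ assigns to each coalition $S$ (with order $\pi_{|S}$) a split $(\varphi_i(S,\pi_{|S}))_{i\in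 S}$ of $v(S)$. AMC-$h$ policy (threshold $h\ge0$): when player $i$ joins coalition $S$, let $\mathsf{MC}_i=v((\pi_{\prec\pi^{-1}(i)}\cap S)\cup\{i\})-v(\pi_{\prec\pi^{-1}(i)}\cap S)$. If $\mathsf{MC}_i\le h$, all of $\mathsf{MC}_i$ is added to the share of the last player of $S$ who arrived before $i$; if $\mathsf{MC}_i>h$, that previous player additionally receives $h$ and $i$ receives $\mathsf{MC}_i-h$; if $i$ is the first player of her coalition, the ''previous player'' is $i$ herself (so she receives $v(\{i\})$). Shares already assigned are never reduced. Greedy players: $\pi_t$ chooses $S^*\in\arg\max_{S\in C^{t-1}\cup\{\emptyset\}}\varphi_{\pi_t}(S\cup\{\pi_t\},\pi_{|S\cup\{\pi_t\}})$, i.e. her share immediately after joining (predetermined tie-breaking). $C_g(v,\pi\mid\varphi)$ is the final structure. The competitive ratio over a class is $\alpha=\inf_{v,\pi}\mathsf{SW}(C_g(v,\pi\mid\varphi))/\max_C\mathsf{SW}(C\mid v)$, over $v$ in the class and all arrival orders $\pi$. *)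

(* Defs.v *)
From HB Require Import structures.
From mathcomp Require Import classical_sets reals.
From mathcomp Require Import all_boot all_order all_algebra perm.
Set Implicit Arguments. Unset Strict Implicit. Unset Printing Implicit Defensive.
Import Order.TTheory GRing.Theory Num.Theory.
Local Open Scope ring_scope.

Section Game.
Variable R : realType.

(* v in V_2 (conditions on v; the conditions 0<min, 2min <= max < 3min on the
   constants are hypotheses of the theorem). *)
Definition inV (mn mx : R) n (v : {set 'I_n} -> R) : Prop :=
  v set0 = 0 /\
  forall S T : {set 'I_n}, S != set0 -> S \subset T ->
    mn <= v S /\ v S <= v T /\ v T <= mx.

Definition hthr (mn mx : R) : R := Num.sqrt (mn * (mn + 4 * mx)) - 3 * mn.

(* A coalition is stored as the sequence of its members in arrival order;
   a (partial) coalition structure is a sequence of coalitions. *)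
Definition members n (s : seq 'I_n) : {set 'I_n} := [set x in s].

(* AMC-h: share of player i immediately after joining the coalition s
   (s = [::] means forming a new singleton coalition). *)
Definition amc_share (h : R) n (v : {set 'I_n} -> R) (s : seq 'I_n) (i : 'I_n) : R :=
  if s is [::] then v [set i]
  else let MC := v (i |: members s) - v (members s) in
       if MC <= h then 0 else MC - h.

(* Options at a step: k < size st means "join coalition number k",
   k = size st means "form a new coalition". *)
Definition option_coal n (st : seq (seq 'I_n)) (k : nat) : seq 'I_n :=
  if (k < size st)%N then nth [::] st k else [::].

Definition best_options (h : R) n (v : {set 'I_n} -> R)
    (st : seq (seq 'I_n)) (i : 'I_n) : seq nat :=
  let cands := iota 0 (size st).+1 in
  let pay k := amc_share h v (option_coal st k) i in
  [seq k <- cands | all (fun k' => pay k' <= pay k) cands].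

(* A predetermined tie-breaking rule: given the current structure, the arriving
   player and the list of maximizing options, it selects one of them (if it
   returns something outside the list, the first maximizing option is used). *)
Definition tiebreak := forall n : nat, seq (seq 'I_n) -> 'I_n -> seq nat -> nat.

Definition greedy_step (h : R) (tb : tiebreak) n (v : {set 'I_n} -> R)
    (st : seq (seq 'I_n)) (i : 'I_n) : seq (seq 'I_n) :=
  let l := best_options h v st i in
  let k := if tb n st i l \in l then tb n st i l else head 0%N l in
  if (k < size st)%N then set_nth [::] st k (rcons (nth [::] st k) i)
  else rcons st [:: i].

Definition greedy_outcome (h : R) (tb : tiebreak) n (v : {set 'I_n} -> R)
    (pi : {perm 'I_n}) : seq (seq 'I_n) :=
  foldl (greedy_step h tb v) [::] [seq pi t | t <- enum 'I_n].

Definition SW_greedy (h : R) (tb : tiebreak) n (v : {set 'I_n} -> R)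
    (pi : {perm 'I_n}) : R :=
  \sum_(s <- greedy_outcome h tb v pi) v (members s).

Definition SW n (v : {set 'I_n} -> R) (C : {set {set 'I_n}}) : R :=
  \sum_(S in C) v S.

Definition OPT n (v : {set 'I_n} -> R) : R :=
  \big[Num.max/0]_(C : {set {set 'I_n}} | partition C [set: 'I_n]) SW v C.

End Game.

(* Main.v *)
Require Import Defs.
From mathcomp Require Import all_boot all_order all_algebra perm.
From mathcomp Require Import classical_sets reals.
From mathcomp Require Import ring lra.
Import Order.TTheory GRing.Theory Num.Theory.
Local Open Scope ring_scope.

Lemma members1 n (a : 'I_n) : members [:: a] = [set a].
Proof. by apply/setP => x; rewrite !inE. Qed.

Lemma members2 n (a b : 'I_n) : members [:: a; b] = [set a; b].
Proof. by apply/setP => x; rewrite !inE. Qed.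

Lemma exists_max {R : realType} (f : nat -> R) (xs : seq nat) :
  xs != [::] -> exists2 x, x \in xs & forall y, y \in xs -> f y <= f x.
Proof.
elim: xs => [//|x xs IH] _.
case: (altP (xs =P [::])) => [->|/IH [m Hm Hmax]].
  by exists x; rewrite ?inE // => y; rewrite inE => /eqP ->.
case: (leP (f x) (f m)) => Hxm.
  exists m; first by rewrite inE Hm orbT.
  by move=> y; rewrite inE => /orP [/eqP ->|/Hmax].
exists x; first by rewrite inE eqxx.
move=> y; rewrite inE => /orP [/eqP ->//|/Hmax H].
by apply: (le_trans H); apply: ltW.
Qed.

Lemma best_spec {R : realType} h n (v : {set 'I_n} -> R) st i k :
  k \in best_options h v st i ->
  (k <= size st)%N /\ forall k', (k' <= size st)%N ->
     amc_share h v (option_coal st k') i <= amc_share h v (option_coal st k) i.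
Proof.
rewrite /best_options mem_filter => /andP [/allP H Hk].
rewrite mem_iota add0n ltnS in Hk; split => // k' Hk'.
by apply: H; rewrite mem_iota add0n ltnS.
Qed.

Lemma best_nonempty {R : realType} h n (v : {set 'I_n} -> R) st i :
  best_options h v st i != [::].
Proof.
rewrite /best_options -has_filter.
have [m Hm Hmax] := @exists_max R (fun k => amc_share h v (option_coal st k) i)
   (iota 0 (size st).+1) isT.
apply/hasP; exists m => //; apply/allP => y Hy; exact: Hmax.
Qed.

Lemma step_spec {R : realType} h (tb : tiebreak) n (v : {set 'I_n} -> R) st i :
  exists k, k \in best_options h v st i /\
   greedy_step h tb v st i =
     if (k < size st)%N then set_nth [::] st k (rcons (nth [::] st k) i)
     else rcons st [:: i].
Proof.
rewrite /greedy_step.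
set l := best_options h v st i.
exists (if tb n st i l \in l then tb n st i l else head 0%N l); split => //.
case: ifP => // _.
have := @best_nonempty R h n v st i; rewrite -/l.
by case: l => // x l _; rewrite mem_head.
Qed.

Definition shape {R : realType} (h : R) {n} (v : {set 'I_n} -> R) (s : seq 'I_n) : Prop :=
  (exists a, s = [:: a]) \/
  (exists a b, s = [:: a; b] /\ a != b /\ v [set a] + v [set b] + h <= v [set a; b]).

Definition Inv {R : realType} (h : R) {n} (v : {set 'I_n} -> R) (st : seq (seq 'I_n)) : Prop :=
  [/\ uniq (flatten st), (forall s, s \in st -> shape h v s) &
  (forall a b, [:: a] \in st -> [:: b] \in st -> a != b ->
      v [set a; b] <= v [set a] + v [set b] + h)].

Lemma neq0 {n} {S : {set 'I_n}} {x} : x \in S -> S != finset.set0.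
Proof. by move=> Hx; apply/set0Pn; exists x. Qed.

Lemma vge {R : realType} {mn mx : R} {n} {v : {set 'I_n} -> R} {S : {set 'I_n}} :
  inV mn mx v -> S != finset.set0 -> mn <= v S.
Proof. by move=> [_ H] HS; have [] := H S S HS (subxx S). Qed.

Lemma vle {R : realType} {mn mx : R} {n} {v : {set 'I_n} -> R} {S : {set 'I_n}} :
  inV mn mx v -> S != finset.set0 -> v S <= mx.
Proof. by move=> [_ H] HS; have [_ []] := H S S HS (subxx S). Qed.

Lemma vmono {R : realType} {mn mx : R} {n} {v : {set 'I_n} -> R} {S T : {set 'I_n}} :
  inV mn mx v -> S != finset.set0 -> S \subset T -> v S <= v T.
Proof. by move=> [_ H] HS HST; have [_ []] := H S T HS HST. Qed.

Lemma join1E {R : realType} (h : R) {n} (v : {set 'I_n} -> R) a i :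
  amc_share h v [:: a] i =
  (if v [set a; i] - v [set a] <= h then 0 else v [set a; i] - v [set a] - h).
Proof. by rewrite /amc_share members1 finset.setUC. Qed.

Lemma join1_ge {R : realType} {h : R} {n} {v : {set 'I_n} -> R} {a i} :
  0 < v [set i] -> v [set i] <= amc_share h v [:: a] i ->
  v [set a] + v [set i] + h <= v [set a; i].
Proof. by rewrite join1E; case: ifP => H1 H2 H3; lra. Qed.

Lemma join1_le {R : realType} {h : R} {n} {v : {set 'I_n} -> R} {a i} :
  0 <= v [set i] -> amc_share h v [:: a] i <= v [set i] ->
  v [set a; i] <= v [set a] + v [set i] + h.
Proof. by rewrite join1E; case: ifP => H1 H2 H3; lra. Qed.

Lemma step_inv {R : realType} (mn mx h : R) (tb : tiebreak) n (v : {set 'I_n} -> R) st i :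
  inV mn mx v -> 0 < mn -> mx < 3 * mn -> 0 <= h ->
  Inv h v st -> i \notin flatten st ->
  Inv h v (greedy_step h tb v st i) /\
  perm_eq (flatten (greedy_step h tb v st i)) (rcons (flatten st) i).
Proof.
move=> HV Hmn Hmx Hh [Hu Hsh Hsg] Hi.
have [k [Hk ->]] := step_spec h tb n v st i.
have [Hks Hpay] := best_spec _ _ _ _ _ _ Hk.
have Halone := Hpay (size st) (leqnn _).
rewrite /option_coal ltnn /= in Halone.
have Hvi : mn <= v [set i] := vge HV (neq0 (set11 i)).
case: ifP => Hlt.
- set s := nth [::] st k.
  have Hs : s \in st := mem_nth [::] Hlt.
  rewrite Hlt -/s in Halone.
  case: (Hsh s Hs) => [[a Ha]|[a [b [Hab [Hne Hv]]]]]; last first.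
    exfalso; move: Halone; rewrite Hab /amc_share /= members2.
    have H1 := vle HV (neq0 (setU11 i [set a; b])).
    have H2 := vge HV (neq0 (set11 a)).
    have H3 := vge HV (neq0 (set11 b)).
    case: ifP => _ H; lra.
  rewrite Ha in Halone.
  have Hai : a != i.
    apply/eqP => Eai; move: Hi; rewrite -Eai => /negP; apply.
    by apply/flattenP; exists s => //; rewrite Ha inE.
  have Hnew := join1_ge (lt_le_trans Hmn Hvi) Halone.
  have Hst : st = take k st ++ [:: a] :: drop k.+1 st.
    by rewrite -Ha /s -drop_nth // cat_take_drop.
  rewrite Ha /= set_nthE Hlt.
  set A := take k st; set B := drop k.+1 st.
  rewrite -/A -/B in Hst.
  have Hmem : forall x, x \in A ++ [:: a; i] :: B -> x = [:: a; i] \/ x \in st.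
    move=> x; rewrite mem_cat inE => /orP [HA|/orP [/eqP ->|HB]]; [right|by left|right].
      by apply: mem_take HA.
    by apply: mem_drop HB.
  have Hperm : perm_eq (flatten (A ++ [:: a; i] :: B)) (rcons (flatten st) i).
    rewrite Hst !flatten_cat /= rcons_cat perm_cat2l.
    by rewrite rcons_cons perm_cons perm_sym perm_rcons.
  split => //; split.
  + by rewrite (perm_uniq Hperm) rcons_uniq Hi.
  + move=> x /Hmem [->|/Hsh //]; right; exists a, i; split => //.
  + move=> c d /Hmem [//|Hc] /Hmem [//|Hd]; exact: Hsg.
- have Eks : k = size st by apply/eqP; rewrite eqn_leq Hks leqNgt Hlt.
  rewrite /option_coal Hlt /= in Hpay.
  have Hperm : perm_eq (flatten (rcons st [:: i])) (rcons (flatten st) i).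
    by rewrite flatten_rcons cats1.
  split => //; split.
  + by rewrite (perm_uniq Hperm) rcons_uniq Hi.
  + move=> x; rewrite mem_rcons inE => /orP [/eqP ->|/Hsh //]; left; by exists i.
  + have Hsing : forall a, [:: a] \in st -> v [set a; i] <= v [set a] + v [set i] + h.
      move=> a Ha; apply: join1_le; first lra.
      have := Hpay (index [:: a] st); rewrite index_mem Ha nth_index //.
      by apply; rewrite ltnW // index_mem.
    have Hia : forall a, [:: a] \in st -> a != i.
      move=> a Ha; apply/eqP => Eai; move: Hi; rewrite -Eai => /negP; apply.
      by apply/flattenP; exists [:: a] => //; rewrite inE.
    move=> c d; rewrite !mem_rcons !inE.
    move=> /orP [/eqP [->]|Hc] /orP [/eqP [->]|Hd] Hcd.
    * by rewrite eqxx in Hcd.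
    * by rewrite finset.setUC (addrC (v [set i])); apply: Hsing.
    * exact: Hsing.
    * exact: Hsg.
Qed.

Lemma fold_inv {R : realType} (mn mx h : R) (tb : tiebreak) n (v : {set 'I_n} -> R) :
  inV mn mx v -> 0 < mn -> mx < 3 * mn -> 0 <= h ->
  forall s st, Inv h v st -> uniq (flatten st ++ s) ->
  Inv h v (foldl (greedy_step h tb v) st s) /\
  perm_eq (flatten (foldl (greedy_step h tb v) st s)) (flatten st ++ s).
Proof.
move=> HV Hmn Hmx Hh; elim=> [|x s IH] st Hst Hu /=; first by rewrite cats0.
have Hx : x \notin flatten st.
  by move: Hu; rewrite cat_uniq => /and3P [_ /hasPn /= H _]; apply: H; rewrite inE eqxx.
have [Hst' Hp] := step_inv mn mx h tb n v st x HV Hmn Hmx Hh Hst Hx.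
have Hu' : uniq (flatten (greedy_step h tb v st x) ++ s).
  by rewrite (perm_uniq (perm_cat Hp (perm_refl s))) cat_rcons.
have [I P] := IH _ Hst' Hu'; split => //.
apply: (perm_trans P); by rewrite -cat_rcons perm_cat2r.
Qed.

Lemma outcome_inv {R : realType} (mn mx h : R) (tb : tiebreak) n (v : {set 'I_n} -> R) pi :
  inV mn mx v -> 0 < mn -> mx < 3 * mn -> 0 <= h ->
  Inv h v (greedy_outcome h tb v pi) /\ forall i, i \in flatten (greedy_outcome h tb v pi).
Proof.
move=> HV Hmn Hmx Hh.
have Hu : uniq (flatten [::] ++ [seq pi t | t <- enum 'I_n]).
  by rewrite /= map_inj_uniq ?enum_uniq //; apply: perm_inj.
have H0 : Inv h v ([::] : seq (seq 'I_n)) by split.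
have [HI HP] := fold_inv mn mx h tb n v HV Hmn Hmx Hh _ _ H0 Hu.
split => // i; rewrite (perm_mem HP) /=.
apply/mapP; exists (perm_inv pi i); first by rewrite mem_enum.
by rewrite permKV.
Qed.

Lemma sum_ge0_seq {R : realType} (T : eqType) (r : seq T) (P : pred T) (F : T -> R) :
  (forall x, x \in r -> 0 <= F x) -> 0 <= \sum_(x <- r | P x) F x.
Proof.
elim: r => [|y r IH] H; first by rewrite big_nil.
rewrite big_cons; have Hr : 0 <= \sum_(x <- r | P x) F x.
  by apply: IH => x Hx; apply: H; rewrite inE Hx orbT.
case: (P y) => //; apply: addr_ge0 => //; apply: H; exact: mem_head.
Qed.

Lemma sum_ge_elem {R : realType} (T : eqType) (r : seq T) (P : pred T) (F : T -> R) x0 :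
  (forall x, x \in r -> 0 <= F x) -> x0 \in r -> P x0 -> F x0 <= \sum_(x <- r | P x) F x.
Proof.
elim: r => [//|y r IH] H Hin HP; rewrite big_cons.
have Hr0 : 0 <= \sum_(x <- r | P x) F x.
  by apply: sum_ge0_seq => z Hz; apply: H; rewrite inE Hz orbT.
have Hy : 0 <= F y by apply: H; exact: mem_head.
move: Hin; rewrite inE => /orP [/eqP Ey|Hx].
  by rewrite -Ey HP lerDl.
have Hr : F x0 <= \sum_(x <- r | P x) F x.
  by apply: IH => // z Hz; apply: H; rewrite inE Hz orbT.
by case: (P y) => //; rewrite -[F x0]add0r; apply: lerD.
Qed.

Lemma ar_single1 {R : realType} {mn h vx wx : R} :
  0 < mn -> 0 <= h -> 0 <= vx -> vx <= wx -> 2 * mn * vx <= (2 * mn + h) * wx.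
Proof. move=> *; nra. Qed.

Lemma ar_pair1 {R : realType} {mn mx h vx wx V : R} :
  0 < mn -> 0 <= h -> 4 * mn * mx = (2 * mn + h) * (4 * mn + h) ->
  V / 2 <= wx -> 2 * mn + h <= V -> V <= mx -> vx + mn + h <= V ->
  2 * mn * vx <= (2 * mn + h) * wx.
Proof.
move=> Hmn Hh Hid Hw HV1 HV2 Hvx.
have Key : V * (2 * mn - h) <= 4 * mn * (mn + h).
  case: (lerP (2 * mn) h) => Hc; first by nra.
  have H1 : V * (2 * mn - h) <= mx * (2 * mn - h) by apply: ler_wpM2r; lra.
  have H2 : 4 * mn * (mx * (2 * mn - h)) <= 4 * mn * (4 * mn * (mn + h)).
    rewrite mulrA Hid; nra.
  have H3 : mx * (2 * mn - h) <= 4 * mn * (mn + h).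
    by rewrite -(ler_pM2l (_ : 0 < 4 * mn)) //; lra.
  lra.
have H4 : (2 * mn + h) * (V / 2) <= (2 * mn + h) * wx by apply: ler_wpM2l => //; lra.
nra.
Qed.

Lemma ar_single2 {R : realType} {mn h vx vy vT wx wy : R} :
  0 < mn -> 0 <= h -> mn <= wx -> mn <= wy -> vx <= wx -> vy <= wy ->
  vT <= vx + vy + h -> 2 * mn * vT <= (2 * mn + h) * (wx + wy).
Proof. move=> *; nra. Qed.

Lemma ar_pair2 {R : realType} {mn mx h vT wx wy V : R} :
  0 < mn -> 0 <= h -> 4 * mn * mx = (2 * mn + h) * (4 * mn + h) ->
  V / 2 <= wx -> 2 * mn + h <= V -> mn <= wy -> vT <= mx ->
  2 * mn * vT <= (2 * mn + h) * (wx + wy).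
Proof.
move=> Hmn Hh Hid Hw HV Hwy HvT.
have H1 : (2 * mn + h) / 2 + mn <= wx + wy by lra.
have H2 : (2 * mn + h) * ((2 * mn + h) / 2 + mn) <= (2 * mn + h) * (wx + wy).
  by apply: ler_wpM2l => //; lra.
have H3 : (2 * mn + h) * ((2 * mn + h) / 2 + mn) = 2 * mn * mx.
  have -> : (2 * mn + h) * ((2 * mn + h) / 2 + mn) = (2 * mn + h) * (4 * mn + h) / 2.
    by field.
  by rewrite -Hid; field.
nra.
Qed.

Lemma ar_big {R : realType} {mn mx h vT sw : R} :
  0 < mn -> 0 <= h -> mx < 3 * mn -> vT <= mx -> 3 * mn <= sw ->
  2 * mn * vT <= (2 * mn + h) * sw.
Proof. move=> *; nra. Qed.

Definition Fw {R : realType} {n} (v : {set 'I_n} -> R) (s : seq 'I_n) : R :=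
  v (members s) / (#|members s|)%:R.

Definition wt {R : realType} {n} (v : {set 'I_n} -> R) (G : seq (seq 'I_n)) (i : 'I_n) : R :=
  \sum_(s <- G | i \in s) Fw v s.

Lemma vnonneg {R : realType} {mn mx : R} {n} {v : {set 'I_n} -> R} (S : {set 'I_n}) :
  inV mn mx v -> 0 < mn -> 0 <= v S.
Proof.
move=> HV Hmn; case: (altP (S =P finset.set0)) => [->|HS].
  by case: HV => -> _.
by apply: le_trans (vge HV HS); apply: ltW.
Qed.

Lemma Fw1 {R : realType} {n} (v : {set 'I_n} -> R) a : Fw v [:: a] = v [set a].
Proof. by rewrite /Fw members1 cards1 divr1. Qed.

Lemma Fw2 {R : realType} {n} (v : {set 'I_n} -> R) a b :
  a != b -> Fw v [:: a; b] = v [set a; b] / 2.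
Proof. by move=> Hab; rewrite /Fw members2 cards2 Hab. Qed.

Lemma sum_wt {R : realType} {n} (v : {set 'I_n} -> R) (G : seq (seq 'I_n)) :
  (forall s, s \in G -> s != [::]) ->
  \sum_i wt v G i = \sum_(s <- G) v (members s).
Proof.
move=> Hne; rewrite /wt.
under eq_bigr do rewrite big_mkcond /=.
rewrite exchange_big /=; apply: eq_big_seq => s Hs.
rewrite -big_mkcond /=.
rewrite (eq_bigl (fun i => i \in members s)); last by move=> i; rewrite inE.
rewrite sumr_const /Fw -(mulr_natr (v (members s) / _)) divfK //.
rewrite pnatr_eq0 -lt0n card_gt0.
move: (Hne s Hs); case: s Hs => // x s _ _.
by apply: (neq0 (x:=x)); rewrite inE mem_head.
Qed.

Lemma classify {R : realType} (mn mx h : R) n (v : {set 'I_n} -> R) (G : seq (seq 'I_n)) i :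
  inV mn mx v -> 0 < mn -> Inv h v G -> i \in flatten G ->
  ([:: i] \in G /\ v [set i] <= wt v G i) \/
  (exists V, [/\ V / 2 <= wt v G i, 2 * mn + h <= V, V <= mx & v [set i] + mn + h <= V]).
Proof.
move=> HV Hmn [Hu Hsh Hsg] /flattenP [s0 Hs0 Hi].
have HF : forall s, s \in G -> 0 <= Fw v s.
  by move=> s _; rewrite /Fw; apply: divr_ge0; [apply: vnonneg HV Hmn|apply: ler0n].
have Hw := @sum_ge_elem R _ G (fun s => i \in s) (Fw v) s0 HF Hs0 Hi.
case: (Hsh s0 Hs0) => [[a Ha]|[a [b [Hab [Hne Hv]]]]].
  left; move: Hi Hw Hs0; rewrite Ha inE => /eqP -> Hw Hs0; split => //.
  by rewrite -Fw1.
right; exists (v [set a; b]).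
rewrite Hab Fw2 // in Hw.
have Ha := vge HV (neq0 (set11 a)).
have Hb := vge HV (neq0 (set11 b)).
have Hm := vle HV (neq0 (x:=a) (setU11 a [set b])).
split => //; first lra.
move: Hi; rewrite Hab !inE => /orP [/eqP ->|/eqP ->]; lra.
Qed.

Lemma perT {R : realType} (mn mx h : R) n (v : {set 'I_n} -> R) (G : seq (seq 'I_n)) (T : {set 'I_n}) :
  inV mn mx v -> 0 < mn -> 0 <= h -> mx < 3 * mn ->
  4 * mn * mx = (2 * mn + h) * (4 * mn + h) ->
  Inv h v G -> (forall i, i \in flatten G) -> T != finset.set0 ->
  2 * mn * v T <= (2 * mn + h) * \sum_(i in T) wt v G i.
Proof.
move=> HV Hmn Hh Hmx Hid HI Hall HT.
have Hwmn : forall i, mn <= wt v G i.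
  move=> i; case: (classify mn mx h n v G i HV Hmn HI (Hall i)) => [[_ H]|[V [H1 H2 _ _]]].
    exact: le_trans (vge HV (neq0 (set11 i))) H.
  lra.
have HvT := vle HV HT.
case: (ltnP 2 #|T|) => H3.
  apply: (ar_big Hmn Hh Hmx HvT).
  have H4 : mn *+ #|T| <= \sum_(i in T) wt v G i.
    by rewrite -sumr_const; apply: ler_sum => i _; apply: Hwmn.
  apply: le_trans H4; rewrite -[mn *+ _]mulr_natr (mulrC 3); apply: ler_wpM2l; first lra.
  by rewrite (ler_nat R 3).
have H0 : (0 < #|T|)%N by rewrite card_gt0.
have [/eqP H1|H2] : (#|T| == 1)%N \/ (#|T| == 2)%N.
  by move: H3 H0; case: #|T| => [|[|[|]]] //; auto.
  have [x Hx] := cards1P (introT eqP H1).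
  rewrite Hx big_set1 -Hx.
  rewrite Hx in HvT *.
  case: (classify mn mx h n v G x HV Hmn HI (Hall x)) => [[_ H]|[V [Hw HV1 HV2 Hvx]]].
    apply: ar_single1 => //; exact: vnonneg HV Hmn.
  exact: (ar_pair1 Hmn Hh Hid Hw HV1 HV2 Hvx).
have [x [y [Hxy Hxy']]] := (cards2P T) H2.
rewrite Hxy' big_setU1 ?inE //= big_set1.
rewrite Hxy' in HvT *.
case: (classify mn mx h n v G x HV Hmn HI (Hall x)) => [[Hx Hwx]|[V [Hw HV1 HV2 Hvx]]]; last first.
  exact: (ar_pair2 Hmn Hh Hid Hw HV1 (Hwmn y) HvT).
case: (classify mn mx h n v G y HV Hmn HI (Hall y)) => [[Hy Hwy]|[V [Hw HV1 HV2 Hvy]]]; last first.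
  rewrite addrC finset.setUC; rewrite finset.setUC in HvT.
  exact: (ar_pair2 Hmn Hh Hid Hw HV1 (Hwmn x) HvT).
case: HI => _ _ Hsg.
exact: (ar_single2 Hmn Hh (Hwmn x) (Hwmn y) Hwx Hwy (Hsg x y Hx Hy Hxy)).
Qed.

Lemma hfacts {R : realType} (mn mx : R) : 0 < mn -> 2 * mn <= mx ->
  0 <= hthr mn mx /\
  4 * mn * mx = (2 * mn + hthr mn mx) * (4 * mn + hthr mn mx).
Proof.
move=> Hmn Hmx; rewrite /hthr.
set S := Num.sqrt _.
have S0 : 0 <= S by apply: sqrtr_ge0.
have S2 : S ^+ 2 = mn * (mn + 4 * mx) by rewrite sqr_sqrtr //; nra.
split; last by rewrite expr2 in S2; nra.
rewrite expr2 in S2.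
have : 3 * mn <= S.
  case: (lerP (3 * mn) S) => // H; nra.
lra.
Qed.

Lemma part_bound {R : realType} (mn mx h : R) n (v : {set 'I_n} -> R) (G : seq (seq 'I_n)) P :
  inV mn mx v -> 0 < mn -> 0 <= h -> mx < 3 * mn ->
  4 * mn * mx = (2 * mn + h) * (4 * mn + h) ->
  Inv h v G -> (forall i, i \in flatten G) -> finset.partition P [set: 'I_n] ->
  2 * mn * SW v P <= (2 * mn + h) * \sum_i wt v G i.
Proof.
move=> HV Hmn Hh Hmx Hid HI Hall HP.
rewrite /SW mulr_sumr.
rewrite (eq_bigl (fun i => i \in [set: 'I_n])); last by move=> i; rewrite inE.
rewrite (set_partition_big _ HP) mulr_sumr.
apply: ler_sum => T HT.
apply: (perT mn mx h n v G T) => //; exact: partition_neq0 HP HT.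
Qed.

Lemma partT n (x : 'I_n) : finset.partition [set [set: 'I_n]] [set: 'I_n].
Proof.
have := @partitionU1 _ finset.set0 finset.set0 [set: 'I_n].
rewrite partition_set0 eqxx !finset.setU0 => H.
apply: H => //; first exact: (neq0 (x := x)).
by rewrite -setI_eq0 finset.setI0.
Qed.

Lemma OPT_ge {R : realType} n (v : {set 'I_n} -> R) (x : 'I_n) :
  v [set: 'I_n] <= OPT v.
Proof.
rewrite /OPT.
have -> : v [set: 'I_n] = SW v [set [set: 'I_n]] by rewrite /SW big_set1.
by apply: le_bigmax_cond; exact: partT x.
Qed.

Lemma ratio_lb {R : realType} (mn mx : R) (tb : tiebreak) n (v : {set 'I_n} -> R) pi :
  0 < mn -> 2 * mn <= mx -> mx < 3 * mn -> (0 < n)%N -> inV mn mx v ->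
  2 * mn / (2 * mn + hthr mn mx) <= SW_greedy (hthr mn mx) tb v pi / OPT v.
Proof.
move=> Hmn H2 H3 Hn HV.
have [Hh Hid] := hfacts mn mx Hmn H2.
set h := hthr mn mx in Hh Hid *.
have [HI Hall] := outcome_inv mn mx h tb n v pi HV Hmn H3 Hh.
set G := greedy_outcome h tb v pi in HI Hall *.
have Hne : forall s, s \in G -> s != [::].
  by case: HI => _ Hsh _ s /Hsh [[a ->]|[a [b [-> _]]]].
have HSW : SW_greedy h tb v pi = \sum_i wt v G i by rewrite /SW_greedy sum_wt.
have HF : forall s, s \in G -> 0 <= Fw v s.
  by move=> s _; rewrite /Fw; apply: divr_ge0; [apply: vnonneg HV Hmn|apply: ler0n].
have HX0 : 0 <= \sum_i wt v G i.
  by apply: sumr_ge0 => i _; apply: sum_ge0_seq.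
rewrite HSW; set X := \sum_i wt v G i in HX0 *.
have Hc : 0 < 2 * mn + h by lra.
have HO : OPT v <= (2 * mn + h) * X / (2 * mn).
  rewrite /OPT; apply: bigmax_le.
    by apply: divr_ge0; [apply: mulr_ge0; lra|lra].
  move=> C HC; rewrite ler_pdivlMr; last lra.
  rewrite mulrC; exact: (part_bound mn mx h n v G C).
have x : 'I_n := Ordinal Hn.
have HOpos : 0 < OPT v.
  apply: lt_le_trans (OPT_ge _ v x).
  apply: lt_le_trans Hmn _; exact: vge HV (neq0 (finset.in_setT x)).
rewrite ler_pdivlMr // mulrAC ler_pdivrMr //.
rewrite ler_pdivlMr in HO; last lra.
lra.
Qed.

Definition vinst {R : realType} (mn t : R) n : {set 'I_n} -> R :=
  fun S => if #|S| == 0%N then 0 else if #|S| == 1%N then mn else 2 * mn + t.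

Lemma vinst_inV {R : realType} (mn mx t : R) n :
  0 < mn -> 0 <= t -> 2 * mn + t <= mx -> inV mn mx (vinst mn t n).
Proof.
move=> Hmn Ht Hmx; split; first by rewrite /vinst cards0.
move=> S T HS HST.
have HST' := subset_leq_card HST.
have hS : (0 < #|S|)%N by rewrite card_gt0.
move: hS HST'; rewrite /vinst.
case: #|S| => [//|[|s]] _; case: #|T| => [//|[|t']] //= H; split; lra.
Qed.

Lemma first_step {R : realType} (h : R) (tb : tiebreak) n (v : {set 'I_n} -> R) i :
  greedy_step h tb v [::] i = [:: [:: i]].
Proof.
have [k [Hk ->]] := step_spec h tb n v [::] i.
by rewrite ltn0.
Qed.

Lemma second_step {R : realType} (mn h t : R) (tb : tiebreak) n (x y : 'I_n) :
  0 < mn -> 0 <= t -> t < h -> x != y ->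
  greedy_step h tb (vinst mn t n) [:: [:: x]] y = [:: [:: x]; [:: y]].
Proof.
move=> Hmn Ht Hth Hxy.
have [k [Hk ->]] := step_spec h tb n (vinst mn t n) [:: [:: x]] y.
have [Hks Hpay] := best_spec _ _ _ _ _ _ Hk.
case: k Hk Hks Hpay => [|[|k]] //= Hk _ Hpay.
exfalso; have := Hpay 1%N isT; rewrite /option_coal /= members1 finset.setUC /vinst.
rewrite cards2 Hxy !cards1 /=.
case: ifP => _ H; lra.
Qed.

Lemma OPTpos {R : realType} (mn mx : R) n (v : {set 'I_n} -> R) (x : 'I_n) :
  0 < mn -> inV mn mx v -> 0 < OPT v.
Proof.
move=> Hmn HV; apply: lt_le_trans (OPT_ge _ v x).
apply: lt_le_trans Hmn _; exact: vge HV (neq0 (finset.in_setT x)).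
Qed.

Lemma r1_le {R : realType} (mn mx : R) (tb : tiebreak) :
  0 < mn -> 2 * mn <= mx ->
  SW_greedy (hthr mn mx) tb (vinst mn 0 1) 1 / OPT (vinst mn 0 1) <= 1.
Proof.
move=> Hmn Hmx.
have HV : inV mn mx (vinst mn 0 1) by apply: vinst_inV => //; lra.
have HO := OPTpos mn mx _ _ ord0 Hmn HV.
have HO2 := OPT_ge _ (vinst mn 0 1) ord0.
rewrite ler_pdivrMr // mul1r.
rewrite /SW_greedy /greedy_outcome enum_ordSl enum_ord0 /= first_step big_seq1 members1.
apply: le_trans HO2; by rewrite /vinst cards1 cardsT card_ord /=.
Qed.

Lemma r2_le {R : realType} (mn mx t : R) (tb : tiebreak) :
  0 < mn -> 0 <= t -> t < hthr mn mx -> 2 * mn + t <= mx ->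
  SW_greedy (hthr mn mx) tb (vinst mn t 2) 1 / OPT (vinst mn t 2) <= 2 * mn / (2 * mn + t).
Proof.
move=> Hmn Ht Hth Hmx.
have HV : inV mn mx (vinst mn t 2) by apply: vinst_inV.
have HO := OPTpos mn mx _ _ ord0 Hmn HV.
have HO2 := OPT_ge _ (vinst mn t 2) ord0.
rewrite /SW_greedy /greedy_outcome enum_ordSl enum_ordSl enum_ord0 /= !perm1.
rewrite first_step second_step //.
rewrite big_cons big_seq1 !members1 /vinst !cards1 /=.
rewrite /vinst cardsT card_ord /= in HO2.
rewrite ler_pdivrMr // mulrAC ler_pdivlMr; last lra.
have : (mn + mn) * (2 * mn + t) <= (mn + mn) * OPT (vinst mn t 2).
  by apply: ler_wpM2l; lra.
rewrite /vinst; lra.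
Qed.

Theorem theorem5 (R : realType) (mn mx : R) (tb : tiebreak) :
  0 < mn -> 2 * mn <= mx -> mx < 3 * mn ->
  inf [set r : R | exists (n : nat) (v : {set 'I_n} -> R) (pi : {perm 'I_n}),
         (0 < n)%N /\ inV mn mx v /\
         r = SW_greedy (hthr mn mx) tb v pi / OPT v]
  = (mn + Num.sqrt (mn * (mn + 4 * mx))) / (2 * mx).
Proof.
move=> Hmn H2 H3.
have [Hh Hid] := hfacts mn mx Hmn H2.
have Hs : Num.sqrt (mn * (mn + 4 * mx)) = hthr mn mx + 3 * mn.
  by rewrite /hthr; lra.
rewrite Hs.
match goal with |- inf ?X = _ => set E := X end.
set h := hthr mn mx in Hh Hid E *.
have Hc : 0 < 2 * mn + h by lra.
have Hmxh : 2 * mn + h <= mx by nra.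
have -> : (mn + (h + 3 * mn)) / (2 * mx) = 2 * mn / (2 * mn + h).
  apply/eqP; rewrite eqr_div; [|lra|lra].
  apply/eqP; nra.
have Hlb : forall r, E r -> 2 * mn / (2 * mn + h) <= r.
  by move=> r [n0 [v0 [pi0 [Hn0 [HV0 ->]]]]]; apply: ratio_lb.
have HE1 : E (SW_greedy h tb (vinst mn 0 1) 1 / OPT (vinst mn 0 1)).
  exists 1%N, (vinst mn 0 1), (1%g : {perm 'I_1}); split => //; split => //.
  by apply: vinst_inV => //; lra.
have HE2 : forall t, 0 <= t -> t < h ->
    E (SW_greedy h tb (vinst mn t 2) 1 / OPT (vinst mn t 2)).
  move=> t Ht Hth; exists 2%N, (vinst mn t 2), (1%g : {perm 'I_2}); split => //; split => //.
  by apply: vinst_inV => //; lra.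
have Hinf : forall r, E r -> inf E <= r.
  by apply: ge_inf; exists (2 * mn / (2 * mn + h)) => r /Hlb.
apply/le_anti/andP; split; last first.
  by apply: lb_le_inf; [exists (SW_greedy h tb (vinst mn 0 1) 1 / OPT (vinst mn 0 1)) | move=> r /Hlb].
have [Eh|Hhp] : h = 0 \/ 0 < h.
  by move: Hh; rewrite le_eqVlt => /orP [/eqP ->|]; [left|right].
  rewrite Eh addr0 divff; last lra.
  exact: le_trans (Hinf _ HE1) (r1_le mn mx tb Hmn H2).
rewrite leNgt; apply/negP => Hlt.
set y := inf E in Hlt Hinf *.
have Hy : 0 < y by apply: lt_trans Hlt; apply: divr_gt0; lra.
rewrite ltr_pdivrMr // in Hlt.
set d := y * (2 * mn + h) - 2 * mn.
have Hd : 0 < d by rewrite /d; lra.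
have Hdy : 0 < d / y by apply: divr_gt0.
set m := Num.min h (d / y).
have Hm0 : 0 < m by rewrite lt_min Hhp Hdy.
have Hm1 : m <= h by rewrite ge_min lexx.
have Hm2 : m <= d / y by rewrite ge_min lexx orbT.
have Hym : y * m <= d.
  have := ler_wpM2l (ltW Hy) Hm2.
  by rewrite (mulrC y (d / y)) divfK //; apply: lt0r_neq0.
set t := h - m / 2.
have Ht0 : 0 <= t by rewrite /t; lra.
have Hth : t < h by rewrite /t; lra.
have Hmt : 2 * mn + t <= mx by rewrite /t; lra.
have := le_trans (Hinf _ (HE2 t Ht0 Hth)) (r2_le mn mx t tb Hmn Ht0 Hth Hmt).
rewrite ler_pdivlMr; last by rewrite /t; lra.
have E1 : y * (2 * mn + t) = d + 2 * mn - y * m / 2 by rewrite /t /d; ring.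
rewrite E1; lra.
Qed.
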